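(* Let $S=(s_1,s_2,\dots,s_k)$ be finitely many positive real numbers such that $\max S\le \sum S/(1+\pi/2)$. Then there exists a cyclic polygon (a polygon inscribed in a circle) with these edge lengths that contains the center of its circle. *)

(* Defs.v *)
From Stdlib Require Import Reals Lra Lia.
Open Scope R_scope.

Fixpoint rsum (n : nat) (f : nat -> R) : R :=
  match n with
  | O => 0
  | S m => rsum m f + f m
  end.

Definition dist2 (x1 y1 x2 y2 : R) : R :=
  sqrt ((x1 - x2) ^ 2 + (y1 - y2) ^ 2).

(* A cyclic polygon with k vertices inscribed in the circle of center (cx,cy)
   and radius r > 0: vertex i is (cx + r cos (theta i), cy + r sin (theta i)),
   the angles theta 0 < theta 1 < ... < theta (k-1) < theta 0 + 2 PI
   (vertices distinct and listed in cyclic order around the circle, so the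
   polygon is simple/convex).  The polygon contains the center: the center lies in
   the (closed) convex hull of the vertices. *)
Definition cyclic_polygon_containing_center (k : nat) (s : nat -> R) : Prop :=
  exists (cx cy r : R) (theta : nat -> R),
    0 < r /\
    (forall i : nat, (i + 1 < k)%nat -> theta i < theta (i + 1)%nat) /\
    theta (k - 1)%nat < theta O + 2 * PI /\
    (let vx := fun i => cx + r * cos (theta i) in
     let vy := fun i => cy + r * sin (theta i) in
     (forall i : nat, (i < k)%nat ->
        dist2 (vx i) (vy i) (vx ((i + 1) mod k)%nat) (vy ((i + 1) mod k)%nat) = s i) /\
     exists w : nat -> R,
       (forall i : nat, (i < k)%nat -> 0 <= w i) /\
       rsum k w = 1 /\
       rsum k (fun i => w i * vx i) = cx /\
       rsum k (fun i => w i * vy i) = cy).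

(* Main.v *)
Require Import Defs.
From Stdlib Require Import Reals Ranalysis5 Lra Lia Classical.
Open Scope R_scope.

Lemma rsum_ext n f g : (forall i, (i < n)%nat -> f i = g i) -> rsum n f = rsum n g.
Proof. induction n; intros H; simpl; auto. rewrite IHn; [rewrite H|]; auto; intros; apply H; lia. Qed.

Lemma rsum_plus n f g : rsum n (fun i => f i + g i) = rsum n f + rsum n g.
Proof. induction n; simpl; [lra|]. rewrite IHn; ring. Qed.

Lemma rsum_scal n c f : rsum n (fun i => c * f i) = c * rsum n f.
Proof. induction n; simpl; [ring|]. rewrite IHn; ring. Qed.

Lemma rsum_zero n : rsum n (fun _ => 0) = 0.
Proof. induction n; simpl; [auto|]. rewrite IHn; ring. Qed.

Definition ind (m i : nat) : R := if Nat.eqb i m then 1 else 0.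

Lemma ind_nonneg m i : 0 <= ind m i.
Proof. unfold ind; destruct (Nat.eqb i m); lra. Qed.

Lemma rsum_ind_out n m g : (n <= m)%nat -> rsum n (fun i => ind m i * g i) = 0.
Proof. induction n; intros H; simpl; auto. rewrite IHn by lia.
  unfold ind. replace (Nat.eqb n m) with false. ring. symmetry; apply Nat.eqb_neq; lia. Qed.

Lemma rsum_ind n m g : (m < n)%nat -> rsum n (fun i => ind m i * g i) = g m.
Proof. induction n; intros H; [lia|]. simpl. destruct (Nat.eq_dec m n).
  - subst. rewrite rsum_ind_out by lia. unfold ind. rewrite Nat.eqb_refl. ring.
  - rewrite IHn by lia. unfold ind. replace (Nat.eqb n m) with false. ring.
    symmetry; apply Nat.eqb_neq; lia. Qed.

Lemma rsum_w n S m1 m2 m3 c1 c2 c3 g : (m1 < n)%nat -> (m2 < n)%nat -> (m3 < n)%nat ->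
  rsum n (fun i => (/S * (ind m1 i * c1 + ind m2 i * c2 + ind m3 i * c3)) * g i)
  = /S * (c1 * g m1 + c2 * g m2 + c3 * g m3).
Proof. intros H1 H2 H3.
  rewrite (rsum_ext n _ (fun i => /S * ((ind m1 i * (c1 * g i) + ind m2 i * (c2 * g i)) + ind m3 i * (c3 * g i)))).
  2:{ intros; ring. }
  rewrite rsum_scal, !rsum_plus, !rsum_ind by auto. ring. Qed.

Lemma rsum_le n f g : (forall i, (i < n)%nat -> f i <= g i) -> rsum n f <= rsum n g.
Proof. induction n; intros H; simpl; [lra|]. assert (f n <= g n) by (apply H; lia).
  assert (rsum n f <= rsum n g) by (apply IHn; intros; apply H; lia). lra. Qed.

Lemma rsum_lower n m c h g : (forall i, (i < n)%nat -> h i <= g i) -> (m < n)%nat ->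
  h m + c <= g m -> rsum n h + c <= rsum n g.
Proof. induction n; intros H Hm Hc; [lia|]. simpl. destruct (Nat.eq_dec m n).
  - subst. assert (rsum n h <= rsum n g) by (apply rsum_le; intros; apply H; lia). lra.
  - assert (rsum n h + c <= rsum n g) by (apply IHn; [intros; apply H; lia | lia | auto]).
    assert (h n <= g n) by (apply H; lia). lra. Qed.

Lemma rsum_mono n i f : (forall j, 0 <= f j) -> (i <= n)%nat -> rsum i f <= rsum n f.
Proof. intros Hf; induction n; intros H.
  - replace i with 0%nat by lia. lra.
  - destruct (Nat.eq_dec i (S n)). subst; lra. simpl. specialize (IHn ltac:(lia)). specialize (Hf n). lra. Qed.

Lemma argmax n (f : nat -> R) : (0 < n)%nat -> exists m, (m < n)%nat /\ forall i, (i < n)%nat -> f i <= f m.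
Proof. induction n; intros H; [lia|]. destruct (Nat.eq_dec n 0).
  - subst. exists 0%nat. split; [lia|]. intros; replace i with 0%nat by lia; lra.
  - destruct (IHn ltac:(lia)) as [m [Hm HM]]. destruct (Rle_dec (f n) (f m)).
    + exists m; split; [lia|]. intros i Hi. destruct (Nat.eq_dec i n). subst; auto. apply HM; lia.
    + exists n; split; [lia|]. intros i Hi. destruct (Nat.eq_dec i n). subst; lra.
      specialize (HM i ltac:(lia)). lra. Qed.

Lemma search (P : nat -> Prop) n : P 0%nat -> ~ P n -> exists j, (j < n)%nat /\ P j /\ ~ P (S j).
Proof. induction n; intros H0 Hn; [contradiction|]. destruct (classic (P n)).
  - exists n; auto.
  - destruct (IHn H0 H) as [j [? ?]]. exists j; split; auto; lia. Qed.

Lemma asin_ge y : 0 < y <= 1 -> y <= asin y.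
Proof. intros Hy. pose proof (asin_bound y). pose proof (sin_asin y ltac:(lra)).
  pose proof PI_RGT_0. destruct (Rle_dec (asin y) 0).
  - pose proof (sin_ge_0 (- asin y) ltac:(lra) ltac:(lra)). rewrite sin_neg in H2. lra.
  - pose proof (sin_lt_x (asin y) ltac:(lra)). lra. Qed.

Lemma asin_ge1 x : 1 <= x -> asin x = PI / 2.
Proof. intros. unfold asin. destruct (Rle_dec x (-1)); [lra|]. destruct (Rle_dec 1 x); [auto|lra]. Qed.

Lemma asin_cont y : 0 <= y <= 1 -> continuity_pt asin y.
Proof. intros Hy. destruct (Rlt_dec y 1).
  - apply derivable_continuous_pt, derivable_pt_asin; lra.
  - replace y with 1 by lra. intros eps Heps. pose proof PI_RGT_0. pose proof PI2_1.
    set (e := Rmin eps 1). assert (He : 0 < e <= 1) by (unfold e, Rmin; destruct Rle_dec; lra).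
    assert (e <= eps) by (unfold e; apply Rmin_l).
    pose proof (cos_decreasing_1 0 e ltac:(lra) ltac:(lra) ltac:(lra) ltac:(lra) ltac:(lra)).
    rewrite cos_0 in H2. pose proof (cos_gt_0 e ltac:(lra) ltac:(lra)).
    exists (1 - cos e). split; [lra|]. intros x [_ Hx]. simpl in *. unfold R_dist in *.
    rewrite asin_1. destruct (Rle_dec 1 x).
    + rewrite asin_ge1 by auto. rewrite Rminus_diag, Rabs_R0; lra.
    + assert (cos e < x) by (apply Rabs_def2 in Hx; lra).
      pose proof (asin_bound x). pose proof (sin_asin x ltac:(lra)).
      destruct (Rle_dec (asin x) (PI/2 - e)).
      * pose proof (Hs := sin_incr_1 (asin x) (PI/2 - e) ltac:(lra) ltac:(lra) ltac:(lra) ltac:(lra) r).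
        rewrite sin_shift in Hs. lra.
      * rewrite Rabs_left1 by lra. lra.
Qed.

Lemma chord r a b y : 0 < r -> 0 <= y -> cos (b - a) = 1 - 2 * y ^ 2 ->
  dist2 (0 + r * cos a) (0 + r * sin a) (0 + r * cos b) (0 + r * sin b) = 2 * r * y.
Proof. intros Hr Hy Hc. unfold dist2. rewrite cos_minus in Hc.
  pose proof (sin2_cos2 a). pose proof (sin2_cos2 b). unfold Rsqr in *.
  replace ((0 + r * cos a - (0 + r * cos b)) ^ 2 + (0 + r * sin a - (0 + r * sin b)) ^ 2)
    with ((2 * r * y) ^ 2) by nra.
  apply sqrt_pow2. nra. Qed.
Lemma rsum_cont n (g : nat -> R -> R) x : (forall i, (i < n)%nat -> continuity_pt (g i) x) ->
  continuity_pt (fun t => rsum n (fun i => g i t)) x.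
Proof. induction n; intros H; simpl.
  - apply continuity_pt_const. intros a b; reflexivity.
  - apply (continuity_pt_plus (fun t => rsum n (fun i => g i t)) (g n)).
    apply IHn; intros; apply H; lia. apply H; lia. Qed.

Lemma term_cont c x : 0 <= c * x <= 1 -> continuity_pt (fun t => 2 * asin (c * t)) x.
Proof. intros H. apply (continuity_pt_mult (fun _ => 2) (fun t => asin (c * t))).
  apply continuity_pt_const; intros a b; reflexivity.
  apply (continuity_pt_comp (fun t => c * t) asin).
  apply (continuity_pt_mult (fun _ => c) (fun t => t)).
  apply continuity_pt_const; intros a b; reflexivity. apply derivable_continuous_pt, derivable_pt_id.
  apply asin_cont; auto. Qed.

Theorem lemma11 (k : nat) (s : nat -> R) :
  (0 < k)%nat ->
  (forall i : nat, (i < k)%nat -> 0 < s i) ->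
  (forall i : nat, (i < k)%nat -> s i <= rsum k s / (1 + PI / 2)) ->
  cyclic_polygon_containing_center k s.
Proof.
  intros Hk Hpos Hmax. pose proof PI_RGT_0 as HPI. pose proof PI2_1 as HPI1.
  destruct (argmax k s Hk) as [m [Hm HM]].
  set (M := s m). fold M in HM. assert (HM0 : 0 < M) by (apply Hpos; auto).
  assert (Hsum : (1 + PI/2) * M <= rsum k s).
  { pose proof (Hmax m Hm). unfold M.
    assert (E : rsum k s / (1+PI/2) * (1+PI/2) = rsum k s) by (field; lra).
    pose proof (Rmult_le_compat_r (1+PI/2) _ _ ltac:(lra) H). lra. }
  set (F := fun t => rsum k (fun i => 2 * asin (s i * t)) - 2 * PI).
  assert (F0 : F 0 = - (2 * PI)).
  { unfold F. rewrite (rsum_ext k _ (fun _ => 0)). rewrite rsum_zero; ring.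
    intros; rewrite Rmult_0_r, asin_0; ring. }
  assert (FM : 0 <= F (/ M)).
  { unfold F.
    assert (rsum k (fun i => 2 * (s i * / M)) + (PI - 2) <= rsum k (fun i => 2 * asin (s i * / M))).
    { apply rsum_lower with m.
      - intros i Hi. pose proof (asin_ge (s i * / M)). pose proof (Hpos i Hi). pose proof (HM i Hi).
        assert (0 < s i * / M <= 1).
        { split. apply Rmult_lt_0_compat; auto; apply Rinv_0_lt_compat; auto.
          apply Rmult_le_reg_r with M; auto. rewrite Rmult_assoc, Rinv_l by lra; lra. }
        specialize (H H2). lra.
      - auto.
      - fold M. rewrite Rinv_r by lra. rewrite asin_1. lra. }
    rewrite (rsum_ext k (fun i => 2 * (s i * / M)) (fun i => (2 * / M) * s i)) in H by (intros; ring).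
    rewrite rsum_scal in H.
    assert (2 * / M * rsum k s >= 2 * / M * ((1 + PI/2) * M)).
    { apply Rle_ge, Rmult_le_compat_l; auto. apply Rmult_le_pos; [lra|]. left; apply Rinv_0_lt_compat; auto. }
    replace (2 * / M * ((1 + PI/2) * M)) with (2 + PI) in H0 by (field; lra). lra. }
  assert (Fc : forall a, 0 <= a <= / M -> continuity_pt F a).
  { intros a Ha. unfold F. apply continuity_pt_minus.
    apply (rsum_cont k (fun i t => 2 * asin (s i * t))). intros i Hi. apply term_cont.
    pose proof (Hpos i Hi). pose proof (HM i Hi). split. apply Rmult_le_pos; lra.
    apply Rle_trans with (M * / M). apply Rmult_le_compat; lra. rewrite Rinv_r by lra; lra.
    apply continuity_pt_const; intros u v; reflexivity. }
  assert (Ht : exists t, 0 < t <= / M /\ F t = 0).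
  { assert (0 < / M) by (apply Rinv_0_lt_compat; auto).
    destruct (Rle_lt_or_eq_dec _ _ FM) as [FM'|FM'].
    - destruct (IVT_interv F 0 (/ M) Fc H ltac:(lra) FM') as [t [Ht1 Ht2]].
      exists t. split; auto. destruct (Req_dec t 0). subst; lra. lra.
    - exists (/ M). split; [lra|auto]. }
  destruct Ht as [t [[Ht0 HtM] Ft]].
  set (al := fun i => 2 * asin (s i * t)).
  assert (Hy : forall i, (i < k)%nat -> 0 < s i * t <= 1).
  { intros i Hi. pose proof (Hpos i Hi). pose proof (HM i Hi). split. apply Rmult_lt_0_compat; lra.
    apply Rle_trans with (M * / M). apply Rmult_le_compat; lra. rewrite Rinv_r by lra; lra. }
  assert (Hal : forall i, (i < k)%nat -> 0 < al i <= PI).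
  { intros i Hi. unfold al. pose proof (asin_ge _ (Hy i Hi)). pose proof (asin_bound (s i * t)).
    pose proof (Hy i Hi). lra. }
  assert (Hsal : rsum k al = 2 * PI) by (unfold F in Ft; unfold al; lra).
  set (th := fun i => rsum i al).
  assert (Hal0 : forall j, 0 <= (fun i => if Nat.ltb i k then al i else 0) j).
  { intros j; simpl. destruct (Nat.ltb j k) eqn:E. apply Nat.ltb_lt in E. pose proof (Hal j E); lra. lra. }
  assert (Hth : forall i, (i <= k)%nat -> th i = rsum i (fun i => if Nat.ltb i k then al i else 0)).
  { intros i Hi. unfold th. apply rsum_ext. intros j Hj. replace (Nat.ltb j k) with true; auto.
    symmetry; apply Nat.ltb_lt; lia. }
  assert (Hthk : th k = 2 * PI) by exact Hsal.
  assert (HthS : forall i, th (S i) = th i + al i) by (intros; reflexivity).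
  assert (Hth0 : th 0%nat = 0) by reflexivity.
  assert (Hchord : forall i, (i < k)%nat -> cos (al i) = 1 - 2 * (s i * t) ^ 2).
  { intros i Hi. unfold al. rewrite cos_2a_sin, sin_asin. ring. pose proof (Hy i Hi); lra. }
  set (r := / (2 * t)).
  assert (Hr : 0 < r) by (unfold r; apply Rinv_0_lt_compat; lra).
  assert (H2r : forall i, 2 * r * (s i * t) = s i) by (intros; unfold r; field; lra).
  exists 0, 0, r, th. split; [auto|]. split.
  { intros i Hi. replace (i + 1)%nat with (S i) by lia. rewrite HthS. pose proof (Hal i ltac:(lia)). lra. }
  split.
  { rewrite Hth0. replace k with (S (k - 1)) in Hthk by lia. rewrite HthS in Hthk.
    pose proof (Hal (k - 1)%nat ltac:(lia)). lra. }
  cbv zeta. split.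
  { intros i Hi. destruct (Nat.eq_dec (i + 1) k).
    - rewrite e, Nat.Div0.mod_same. rewrite <- (H2r i). apply chord; auto. pose proof (Hy i Hi); lra.
      rewrite Hth0. replace k with (S i) in Hthk by lia. rewrite HthS in Hthk.
      replace (th i) with (2 * PI - al i) by lra.
      rewrite cos_minus, cos_0, sin_0, cos_minus, cos_2PI, sin_2PI, Hchord by auto. ring.
    - rewrite Nat.mod_small by lia. rewrite <- (H2r i). apply chord; auto. pose proof (Hy i Hi); lra.
      replace (i + 1)%nat with (S i) by lia. rewrite HthS. replace (th i + al i - th i) with (al i) by ring.
      auto. }
  destruct (search (fun i => th i < PI) k ltac:(cbv beta; rewrite Hth0; lra) ltac:(cbv beta; rewrite Hthk; lra))
    as [j [Hj [Ha Hb]]].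
  set (a := th j) in *. set (b := th (S j)) in *.
  assert (Hba : b = a + al j) by (unfold b, a; apply HthS).
  pose proof (Hal j Hj) as Halj.
  assert (Ha0 : 0 <= a).
  { unfold a. rewrite Hth by lia. apply Rle_trans with (rsum j (fun _ => 0)); [rewrite rsum_zero; lra|]. apply rsum_le. intros; apply Hal0. }
  assert (Hb2 : b <= 2 * PI).
  { rewrite <- Hthk. unfold b. rewrite !Hth by lia. apply rsum_mono; auto. }
  set (jj := if Nat.ltb (S j) k then S j else 0%nat).
  assert (Hjj : (jj < k)%nat) by (unfold jj; destruct (Nat.ltb (S j) k) eqn:E; [apply Nat.ltb_lt in E|]; lia).
  assert (Hcs : cos (th jj) = cos b /\ sin (th jj) = sin b).
  { unfold jj. destruct (Nat.ltb (S j) k) eqn:E. auto.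
    apply Nat.ltb_ge in E. assert (Ek : S j = k) by lia. unfold b. rewrite Ek, Hthk, Hth0.
    rewrite cos_2PI, sin_2PI, cos_0, sin_0. auto. }
  assert (Hc : exists c1 c2 c3 S, 0 < S /\ 0 <= c1 /\ 0 <= c2 /\ 0 <= c3 /\ c1 + c2 + c3 = S /\
     c1 + c2 * cos a + c3 * cos b = 0 /\ c2 * sin a + c3 * sin b = 0).
  { assert (HA : 0 <= sin (b - a)) by (apply sin_ge_0; lra).
    assert (HB : 0 <= - sin b).
    { replace b with ((b - PI) + PI) by ring. rewrite neg_sin. cut (0 <= sin (b - PI)); [lra|].
      apply sin_ge_0; lra. }
    assert (HC : 0 <= sin a) by (apply sin_ge_0; lra).
    destruct (Rlt_dec 0 (sin (b - a) + - sin b + sin a)).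
    - exists (sin (b - a)), (- sin b), (sin a), (sin (b - a) + - sin b + sin a).
      rewrite sin_minus in *. repeat split; try lra; ring.
    - assert (sin a = 0) by lra. assert (sin b = 0) by lra.
      assert (Ea : a = 0). { destruct (Rle_dec a 0). lra. pose proof (sin_gt_0 a ltac:(lra) ltac:(lra)). lra. }
      assert (Eb : b = PI). { destruct (Rle_dec PI b); [lra|]. pose proof (sin_gt_0 b ltac:(lra) ltac:(lra)). lra. }
      exists 0, (1/2), (1/2), 1. rewrite Ea, Eb, cos_0, cos_PI, sin_0, sin_PI. repeat split; lra. }
  destruct Hc as [c1 [c2 [c3 [S [HS [H1 [H2 [H3 [H4 [H5 H6]]]]]]]]]].
  exists (fun i => /S * (ind 0 i * c1 + ind j i * c2 + ind jj i * c3)).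
  split.
  { intros i Hi. apply Rmult_le_pos. left; apply Rinv_0_lt_compat; auto.
    pose proof (ind_nonneg 0 i). pose proof (ind_nonneg j i). pose proof (ind_nonneg jj i). nra. }
  destruct Hcs as [Hcj Hsj].
  split; [|split].
  - rewrite (rsum_ext k _ (fun i => (/S * (ind 0 i * c1 + ind j i * c2 + ind jj i * c3)) * (fun _ => 1) i))
      by (intros; ring).
    rewrite rsum_w by auto. rewrite <- H4. field. lra.
  - rewrite rsum_w by auto. rewrite Hth0, Hcj, cos_0. fold a.
    replace (c1 * (0 + r * 1) + c2 * (0 + r * cos a) + c3 * (0 + r * cos b))
      with (r * (c1 + c2 * cos a + c3 * cos b)) by ring. rewrite H5. ring.
  - rewrite rsum_w by auto. rewrite Hth0, Hsj, sin_0. fold a.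
    replace (c1 * (0 + r * 0) + c2 * (0 + r * sin a) + c3 * (0 + r * sin b))
      with (r * (c2 * sin a + c3 * sin b)) by ring. rewrite H6. ring.
Qed.
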